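(* Let $C=w_1-\dots-w_m$ be a chain with $m\ge 2$ edges and positive weights $w_1,\dots,w_m$. Then $$L_1(C)=\max\sum_{j=1}^{p+1}L_\emptyset(C_j),$$ where the maximum runs over all admissible decompositions $C=C_1-\dots-C_{p+1}$ of $C$ into subchains of at least two edges. In particular $C$ is extremal iff the trivial decomposition (with $p=0$, i.e. $C_1=C$) is the only admissible decomposition.
   Context: For a chain $C'=v_1-\dots-v_r$ ($r\ge 2$ edges, positive weights $v_i$): $L_1(C')=\max\{\sum_{i=1}^r v_ix_i : x\in\mathbb{R}^r,\ x_i^2+x_{i+1}^2\le 1\ \forall\,1\le i\le r-1\}$; $\Sigma_{\rm odd}(C')=\sum_{i\ \text{odd}}v_i$, $\Sigma_{\rm even}(C')=\sum_{i\ \text{even}}v_i$; the bare length is $L_\emptyset(C')=\sqrt{\Sigma_{\rm odd}(C')^2+\Sigma_{\rm even}(C')^2}$; $C'$ is extremal if $L_1(C')=L_\emptyset(C')$. A decomposition of $C=w_1-\dots-w_m$ into $p+1$ subchains is given by integers $0=i_0<i_1<\dots<i_p<i_{p+1}=m$, with $C_j=w_{i_{j-1}+1}-\dots-w_{i_j}$. For such a decomposition let $\tilde\Sigma_{\rm odd}(C_j)=\sum\{w_i : i_{j-1}<i\le i_j,\ i\text{ odd}\}$ and $\tilde\Sigma_{\rm even}(C_j)=\sum\{w_i : i_{j-1}<i\le i_j,\ i\text{ even}\}$ (parity taken with respect to the numbering in $C$), and for $1\le j\le p$ let $\Delta_j=\tilde\Sigma_{\rm even}(C_j)\tilde\Sigma_{\rm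 odd}(C_{j+1})-\tilde\Sigma_{\rm even}(C_{j+1})\tilde\Sigma_{\rm odd}(C_j)$. The decomposition is admissible if every $C_j$ has at least two edges and, for every $1\le j\le p$, $\Delta_j<0$ when $i_j$ is even and $\Delta_j>0$ when $i_j$ is odd (the trivial decomposition $p=0$ is admissible). *)

(* Defs.v *)
From HB Require Import structures.
From mathcomp Require Import all_boot all_order all_algebra.
From mathcomp Require Import classical_sets reals.
Set Implicit Arguments. Unset Strict Implicit. Unset Printing Implicit Defensive.
Import Order.TTheory GRing.Theory Num.Theory.
Local Open Scope ring_scope.
Local Open Scope classical_set_scope.

(* A chain v_1 - ... - v_r is given by a weight function v : nat -> R
   (only the values v 1, ..., v r matter) and its number of edges r. *)

Definition L1 (R : realType) (v : nat -> R) (r : nat) : R :=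
  sup [set y : R | exists2 x : nat -> R,
         (forall i : nat, (1 <= i < r)%N -> x i ^+ 2 + x i.+1 ^+ 2 <= 1) &
         y = \sum_(1 <= i < r.+1) v i * x i].

(* The subchain w_{a+1} - ... - w_b of C, with its own numbering k = i - a. *)
Definition sigma_odd_sub (R : realType) (w : nat -> R) (a b : nat) : R :=
  \sum_(a.+1 <= i < b.+1 | odd (i - a)) w i.
Definition sigma_even_sub (R : realType) (w : nat -> R) (a b : nat) : R :=
  \sum_(a.+1 <= i < b.+1 | ~~ odd (i - a)) w i.

Definition Lbare (R : realType) (w : nat -> R) (a b : nat) : R :=
  Num.sqrt (sigma_odd_sub w a b ^+ 2 + sigma_even_sub w a b ^+ 2).

(* Tilde sums: parity w.r.t. the numbering in C. *)
Definition tsigma_odd (R : realType) (w : nat -> R) (a b : nat) : R :=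
  \sum_(a.+1 <= i < b.+1 | odd i) w i.
Definition tsigma_even (R : realType) (w : nat -> R) (a b : nat) : R :=
  \sum_(a.+1 <= i < b.+1 | ~~ odd i) w i.

(* A decomposition of C = w_1 - ... - w_m into p+1 subchains is encoded by
   the list s = [:: i_1; ...; i_p] of cut points; the boundaries are
   bnds m s = [:: i_0 = 0; i_1; ...; i_p; i_{p+1} = m]. *)
Definition bnds (m : nat) (s : seq nat) : seq nat := 0%N :: rcons s m.

(* Delta_j, for 1 <= j <= p, with a = i_{j-1}, b = i_j, c = i_{j+1}. *)
Definition Delta (R : realType) (w : nat -> R) (a b c : nat) : R :=
  tsigma_even w a b * tsigma_odd w b c - tsigma_even w b c * tsigma_odd w a b.

Definition admissible (R : realType) (w : nat -> R) (m : nat) (s : seq nat) : Prop :=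
  path (fun a b => (a.+2 <= b)%N) 0%N (rcons s m) /\
  forall j : nat, (1 <= j <= size s)%N ->
    let t := bnds m s in
    let a := nth 0%N t j.-1 in
    let b := nth 0%N t j in
    let c := nth 0%N t j.+1 in
    if odd b then 0 < Delta w a b c else Delta w a b c < 0.

Definition decomp_length (R : realType) (w : nat -> R) (m : nat) (s : seq nat) : R :=
  \sum_(j < (size s).+1) Lbare w (nth 0%N (bnds m s) j) (nth 0%N (bnds m s) j.+1).

Definition extremal (R : realType) (v : nat -> R) (r : nat) : Prop :=
  L1 v r = Lbare v 0 r.

(* Main.v *)
Require Import Defs.
From HB Require Import structures.
From mathcomp Require Import all_boot all_order all_algebra.
From mathcomp Require Import classical_sets reals.
From mathcomp Require Import ring lra zify.
Import Order.TTheory GRing.Theory Num.Theory.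

Module A.
Import Order.TTheory GRing.Theory Num.Theory.
Local Open Scope ring_scope.

Section Chain.
Variable (R : realType).

Lemma path_leq_last (a : nat) (t : seq nat) : path leq a t -> (a <= last a t)%N.
Proof.
elim: t a => [|b t IH] a //= /andP[ab pt].
exact: leq_trans ab (IH _ pt).
Qed.

Lemma split_sum (F : nat -> R) (a : nat) (t : seq nat) :
  path leq a t ->
  \sum_(a.+1 <= i < (last a t).+1) F i =
  \sum_(j < size t) \sum_((nth 0 (a :: t) j).+1 <= i < (nth 0 (a :: t) j.+1).+1) F i.
Proof.
elim: t a => [|b t IH] a /=.
  by move=> _; rewrite big_ord0 big_geq.
move=> /andP[ab pt]; rewrite big_ord_recl /=.
rewrite (big_cat_nat _ (n:=b.+1)) //=; last by rewrite ltnS path_leq_last.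
by rewrite IH.
Qed.
End Chain.

End A.
Import A.

Module B.
Import Order.TTheory GRing.Theory Num.Theory.
Local Open Scope ring_scope.

Section Real.
Variable (R : realType).
Implicit Types (a b x y : R).

Lemma sqr_sum_eq0 x y : x ^+ 2 + y ^+ 2 = 0 -> x = 0 /\ y = 0.
Proof.
move=> h; have hx : x ^+ 2 = 0.
  by apply/eqP; rewrite eq_le sqr_ge0 andbT; nra.
have hy : y ^+ 2 = 0 by rewrite hx add0r in h.
by split; apply/eqP; rewrite -sqrf_eq0; apply/eqP.
Qed.

Lemma nrm_sqr a b : Num.sqrt (a ^+ 2 + b ^+ 2) ^+ 2 = a ^+ 2 + b ^+ 2.
Proof. by rewrite sqr_sqrtr // addr_ge0 // sqr_ge0. Qed.

Lemma nrm_ge0 a b : 0 <= Num.sqrt (a ^+ 2 + b ^+ 2).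
Proof. exact: sqrtr_ge0. Qed.

Lemma cs_le (a b u1 u2 : R) : u1 ^+ 2 + u2 ^+ 2 = 1 ->
  a * u1 + b * u2 <= Num.sqrt (a ^+ 2 + b ^+ 2).
Proof.
move=> hu; set n := Num.sqrt _.
have h2 := nrm_sqr a b; have h0 := nrm_ge0 a b; rewrite -/n in h2 h0.
have : (a * u1 + b * u2) ^+ 2 <= n ^+ 2.
  rewrite h2; have : 0 <= (a * u2 - b * u1) ^+ 2 by exact: sqr_ge0.
  have -> : a ^+ 2 + b ^+ 2 = (a ^+ 2 + b ^+ 2) * (u1 ^+ 2 + u2 ^+ 2) by rewrite hu mulr1.
  move=> h; nra.
move=> h; nra.
Qed.

Lemma cs_eq (a b u1 u2 : R) : u1 ^+ 2 + u2 ^+ 2 = 1 ->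
  0 < Num.sqrt (a ^+ 2 + b ^+ 2) ->
  a * u1 + b * u2 = Num.sqrt (a ^+ 2 + b ^+ 2) ->
  u1 = a / Num.sqrt (a ^+ 2 + b ^+ 2) /\ u2 = b / Num.sqrt (a ^+ 2 + b ^+ 2).
Proof.
move=> hu; set n := Num.sqrt _ => n0 he.
have h2 := nrm_sqr a b; rewrite -/n in h2.
have : (u1 * n - a) ^+ 2 + (u2 * n - b) ^+ 2 = 0.
  have -> : (u1 * n - a) ^+ 2 + (u2 * n - b) ^+ 2 =
    n ^+ 2 * (u1 ^+ 2 + u2 ^+ 2) - 2 * n * (a * u1 + b * u2) + (a ^+ 2 + b ^+ 2) by ring.
  by rewrite hu he -h2; ring.
move=> /sqr_sum_eq0 [e1 e2].
have nz : n != 0 by rewrite gt_eqF.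
split; apply: (mulIf nz); rewrite mulfVK //; lra.
Qed.
End Real.

End B.
Import B.

Module C.
Set Implicit Arguments. Unset Strict Implicit.

Definition gap (t : seq nat) :=
  forall j, j.+1 < size t -> (nth 0 t j).+2 <= nth 0 t j.+1.

Lemma gap_mono t j j' : gap t -> j <= j' -> j' < size t -> nth 0 t j <= nth 0 t j'.
Proof.
move=> g; elim: j' => [|j' IH]; first by rewrite leqn0 => /eqP ->.
rewrite leq_eqVlt => /orP[/eqP -> //|]; rewrite ltnS => jj' hs.
have := g j' hs; have := IH jj' (ltnW hs); lia.
Qed.

Lemma gap_lt t j j' : gap t -> j < j' -> j' < size t -> (nth 0 t j).+2 <= nth 0 t j'.
Proof.
move=> g jj' hs; have h1 := g j (leq_ltn_trans jj' hs).
have h2 := gap_mono g jj' hs; lia.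
Qed.

Lemma locate t i k : k < size t -> nth 0 t 0 < i <= nth 0 t k ->
  exists2 j, j < k & nth 0 t j < i <= nth 0 t j.+1.
Proof.
elim: k => [|k IH] hk; first by lia.
move=> /andP[h1 h2].
case: (leqP i (nth 0 t k)) => hik.
  have [j jk hj] := IH (ltnW hk) (introT andP (conj h1 hik)).
  by exists j => //; lia.
by exists k => //; apply/andP; split.
Qed.

Lemma locate_unique t i j j' : gap t -> j.+1 < size t -> j'.+1 < size t ->
  nth 0 t j < i <= nth 0 t j.+1 -> nth 0 t j' < i <= nth 0 t j'.+1 -> j = j'.
Proof.
move=> g hj hj' /andP[a1 a2] /andP[b1 b2].
case: (ltngtP j j') => // hlt.
- have := gap_mono g hlt (ltnW hj'); lia.
- have := gap_mono g hlt (ltnW hj); lia.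
Qed.

Lemma gap_notin t j k : gap t -> j.+1 < size t -> nth 0 t j < k < nth 0 t j.+1 -> k \notin t.
Proof.
move=> g hj /andP[h1 h2]; apply/negP => kt.
have hi : index k t < size t by rewrite index_mem.
have e := nth_index 0 kt.
case: (leqP (index k t) j) => hij.
- have := gap_mono g hij (ltnW hj); rewrite e; lia.
- have := gap_mono g hij hi; rewrite e; lia.
Qed.


Lemma size_bnds m s : size (bnds m s) = (size s).+2.
Proof. by rewrite /bnds /= size_rcons. Qed.

Lemma nth_bnds_last m s : nth 0 (bnds m s) (size s).+1 = m.
Proof. by rewrite /bnds /= nth_rcons ltnn eqxx. Qed.

Lemma gap_path m s : gap (bnds m s) <-> path (fun a b => a.+2 <= b) 0 (rcons s m).
Proof.
split.
- move=> g; apply/(pathP 0) => i; rewrite size_rcons => hi; apply: g; by rewrite size_bnds.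
- move=> /(pathP 0) h j hj; apply: h; by move: hj; rewrite size_bnds size_rcons ltnS.
Qed.

Lemma mem_bnds m s k : k \in bnds m s -> k = 0 \/ k \in s \/ k = m.
Proof.
rewrite /bnds /= in_cons mem_rcons in_cons => /orP[/eqP->|/orP[/eqP->|]]; tauto.
Qed.

End C.
Import C.

Module D.
Set Implicit Arguments. Unset Strict Implicit.
Import Order.TTheory GRing.Theory Num.Theory.
Local Open Scope ring_scope.

Section Alg.
Variable R : realType.

Lemma alg_key (X Y p q : R) : 0 < X -> 0 < Y -> 0 < p -> 0 < q ->
  (X / Num.sqrt (X ^+ 2 + Y ^+ 2)) ^+ 2 + (p / Num.sqrt (p ^+ 2 + q ^+ 2)) ^+ 2 < 1
  <-> X * p < Y * q.
Proof.
move=> X0 Y0 p0 q0.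
rewrite !expr_div_n !nrm_sqr.
have A0 : 0 < X ^+ 2 + Y ^+ 2 by nra.
have B0 : 0 < p ^+ 2 + q ^+ 2 by nra.
have -> : X ^+ 2 / (X ^+ 2 + Y ^+ 2) + p ^+ 2 / (p ^+ 2 + q ^+ 2) =
  (X ^+ 2 * (p ^+ 2 + q ^+ 2) + p ^+ 2 * (X ^+ 2 + Y ^+ 2)) /
  ((X ^+ 2 + Y ^+ 2) * (p ^+ 2 + q ^+ 2)).
  by field; apply/andP; split; rewrite gt_eqF.
rewrite ltr_pdivrMr ?mulr_gt0 // mul1r.
have e : (X ^+ 2 * (p ^+ 2 + q ^+ 2) + p ^+ 2 * (X ^+ 2 + Y ^+ 2) <
   (X ^+ 2 + Y ^+ 2) * (p ^+ 2 + q ^+ 2)) = ((X * p) ^+ 2 < (Y * q) ^+ 2).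
  by rewrite -subr_gt0 -[X in _ = X]subr_gt0; congr (0 < _); ring.
rewrite e ltr_pXn2r // nnegrE; apply: ltW; exact: mulr_gt0.
Qed.

Lemma alg_key' (X Y p q : R) : 0 < X -> 0 < Y -> 0 < p -> 0 < q ->
  (X / Num.sqrt (Y ^+ 2 + X ^+ 2)) ^+ 2 + (p / Num.sqrt (p ^+ 2 + q ^+ 2)) ^+ 2 < 1
  <-> X * p < Y * q.
Proof. by rewrite [Y ^+ 2 + _]addrC; exact: alg_key. Qed.
End Alg.

Section Chain.
Variables (R : realType) (w : nat -> R) (m : nat).
Hypothesis hw : forall i : nat, (1 <= i <= m)%N -> 0 < w i.

Definition vl (a b i : nat) : R :=
  if odd (i - a) then sigma_odd_sub w a b / Lbare w a b
  else sigma_even_sub w a b / Lbare w a b.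

Lemma pq_pos a b : (a.+2 <= b)%N -> (b <= m)%N ->
  0 < sigma_odd_sub w a b /\ 0 < sigma_even_sub w a b.
Proof.
move=> ab bm; rewrite /sigma_odd_sub /sigma_even_sub.
have h1 : (a.+1 < b.+1)%N by lia.
have h2 : (a.+2 < b.+1)%N by lia.
have ge : forall c (P : pred nat), (a < c)%N -> 0 <= \sum_(c <= i < b.+1 | P i) w i.
  move=> c P ac; rewrite big_nat_cond; apply: sumr_ge0 => i /andP[/andP[i1 i2] _].
  by apply: ltW; apply: hw; lia.
have e1 : (a.+1 - a = 1)%N by lia.
have e2 : (a.+2 - a = 2)%N by lia.
split.
- rewrite (big_ltn_cond h1) e1 /=; apply: ltr_pwDl; first (apply: hw; lia).
  apply: ge; lia.
- rewrite (big_ltn_cond h1) e1 /= (big_ltn_cond h2) e2 /=.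
  apply: ltr_pwDl; first (apply: hw; lia).
  apply: ge; lia.
Qed.

Lemma Lb_pos a b : (a.+2 <= b)%N -> (b <= m)%N -> 0 < Lbare w a b.
Proof.
move=> ab bm; have [p0 q0] := pq_pos ab bm.
by rewrite /Lbare sqrtr_gt0; nra.
Qed.
Lemma odd_subS a i : (a <= i)%N -> odd (i.+1 - a) = ~~ odd (i - a).
Proof. by move=> ai; rewrite subSn. Qed.

Lemma vl_sq a b i : (a.+2 <= b)%N -> (b <= m)%N -> (a <= i)%N ->
  vl a b i ^+ 2 + vl a b i.+1 ^+ 2 = 1.
Proof.
move=> ab bm ai; have L0 := Lb_pos ab bm.
have e : (sigma_odd_sub w a b / Lbare w a b) ^+ 2 + (sigma_even_sub w a b / Lbare w a b) ^+ 2 = 1.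
  rewrite !expr_div_n -mulrDl /Lbare nrm_sqr divff // -nrm_sqr.
  by rewrite expf_neq0 // gt_eqF.
rewrite /vl odd_subS //; case: (odd (i - a)) => //=; by rewrite addrC.
Qed.

Lemma piece_sum a b (z : nat -> R) (al be : R) :
  (forall i, (a < i <= b)%N -> z i = if odd (i - a) then al else be) ->
  \sum_(a.+1 <= i < b.+1) w i * z i =
  sigma_odd_sub w a b * al + sigma_even_sub w a b * be.
Proof.
move=> hz; rewrite (bigID (fun i => odd (i - a))) /= /sigma_odd_sub /sigma_even_sub !mulr_suml.
congr (_ + _); rewrite big_nat_cond [RHS]big_nat_cond; apply: eq_bigr => i /andP[/andP[i1 i2] hp];
  rewrite hz ?(negbTE hp) ?hp //; lia.
Qed.

Lemma tsig_odd a b : tsigma_odd w a b =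
  if odd a then sigma_even_sub w a b else sigma_odd_sub w a b.
Proof.
rewrite /tsigma_odd /sigma_even_sub /sigma_odd_sub.
case: ifP => ha; rewrite big_nat_cond [RHS]big_nat_cond; apply: eq_bigl => i;
  case: (boolP (a.+1 <= i < b.+1)%N) => //= /andP[i1 _]; rewrite oddB ?ha; try lia;
  by case: (odd i).
Qed.

Lemma tsig_even a b : tsigma_even w a b =
  if odd a then sigma_odd_sub w a b else sigma_even_sub w a b.
Proof.
rewrite /tsigma_even /sigma_even_sub /sigma_odd_sub.
case: ifP => ha; rewrite big_nat_cond [RHS]big_nat_cond; apply: eq_bigl => i;
  case: (boolP (a.+1 <= i < b.+1)%N) => //= /andP[i1 _]; rewrite oddB ?ha; try lia;
  by case: (odd i).
Qed.

Lemma Lbare_t a b : Lbare w a b =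
  Num.sqrt (tsigma_odd w a b ^+ 2 + tsigma_even w a b ^+ 2).
Proof. by rewrite tsig_odd tsig_even /Lbare; case: ifP => _ //; rewrite addrC. Qed.

Lemma delta_equiv a b c : (a.+2 <= b)%N -> (b.+2 <= c)%N -> (c <= m)%N ->
  (vl a b b ^+ 2 + vl b c b.+1 ^+ 2 < 1) <->
  (if odd b then 0 < Delta w a b c else Delta w a b c < 0).
Proof.
move=> ab bc cm.
have [p0 q0] := pq_pos ab (leq_trans (leq_trans (leqnSn _) (leqnSn _)) (leq_trans bc cm)).
have [p1 q1] := pq_pos bc cm.
have e1 : (b.+1 - b = 1)%N by lia.
rewrite /vl e1 /= /Delta !tsig_odd !tsig_even /Lbare oddB; last by lia.
case: (odd a); case: (odd b) => /=.
- first [rewrite alg_key // | rewrite alg_key' //]; split => h; lra.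
- first [rewrite alg_key // | rewrite alg_key' //]; split => h; lra.
- first [rewrite alg_key // | rewrite alg_key' //]; split => h; lra.
- first [rewrite alg_key // | rewrite alg_key' //]; split => h; lra.
Qed.
End Chain.

End D.
Import D.

Module E.
Set Implicit Arguments. Unset Strict Implicit.
Import Order.TTheory GRing.Theory Num.Theory.
Local Open Scope ring_scope.
Local Open Scope classical_set_scope.

Section Decomp.
Variables (R : realType) (w : nat -> R) (m : nat).
Hypothesis hm : (2 <= m)%N.
Hypothesis hw : forall i : nat, (1 <= i <= m)%N -> 0 < w i.

Definition feas (x : nat -> R) := forall i : nat, (1 <= i < m)%N -> x i ^+ 2 + x i.+1 ^+ 2 <= 1.
Definition V (x : nat -> R) := \sum_(1 <= i < m.+1) w i * x i.

Lemma feas_le1 x i : feas x -> (1 <= i <= m)%N -> x i ^+ 2 <= 1.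
Proof.
move=> f /andP[i1 i2]; case: (ltnP i m) => him.
- have := f i (introT andP (conj i1 him)); have := sqr_ge0 (x i.+1); lra.
- have ei : i = m by lia.
  have h1 : (1 <= m.-1 < m)%N by lia.
  have e : (m.-1).+1 = m by lia.
  rewrite ei; have := f _ h1; rewrite e; have := sqr_ge0 (x m.-1); lra.
Qed.

Lemma V_le x : feas x -> V x <= \sum_(1 <= i < m.+1) w i.
Proof.
move=> f; rewrite /V big_nat_cond [X in _ <= X]big_nat_cond; apply: ler_sum => i /andP[hi _].
have h1 : (1 <= i <= m)%N by lia.
have := feas_le1 f h1; have := hw h1 => w0 hx.
have : x i <= 1 by nra.
move=> hx1; rewrite -[X in _ <= X]mulr1; apply: ler_wpM2l => //; exact: ltW.
Qed.

Definition Sset := [set y : R | exists2 x : nat -> R, feas x & y = V x].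

Lemma L1E : L1 w m = sup Sset.
Proof. by []. Qed.

Lemma Sset_has_ub : has_ubound Sset.
Proof. by exists (\sum_(1 <= i < m.+1) w i) => y [x fx ->]; exact: V_le. Qed.

Lemma Sset_ne : Sset !=set0.
Proof.
exists (V (fun=> 0)); exists (fun=> 0) => // i _; rewrite expr0n /=; lra.
Qed.

Lemma V_le_L1 x : feas x -> V x <= L1 w m.
Proof. move=> fx; rewrite L1E; apply: ub_le_sup; [exact: Sset_has_ub | by exists x]. Qed.

Lemma L1_le M : (forall x, feas x -> V x <= M) -> L1 w m <= M.
Proof. move=> h; rewrite L1E; apply: ge_sup; [exact: Sset_ne | by move=> y [x fx ->]; apply: h]. Qed.

Section S.
Variable s : seq nat.
Local Notation t := (bnds m s).
Local Notation tj j := (nth 0%N (bnds m s) j).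

Definition xs (i : nat) : R :=
  \sum_(j < (size s).+1) (if (tj j < i <= tj j.+1)%N then vl w (tj j) (tj j.+1) i else 0).

Hypothesis g : gap t.


Lemma t_le_m j : (j < (size s).+2)%N -> (tj j <= m)%N.
Proof.
move=> hj; have := gap_mono (j:=j) (j':=(size s).+1) g; rewrite nth_bnds_last size_bnds.
apply; lia.
Qed.

Lemma piece_ok j : (j < (size s).+1)%N -> ((tj j).+2 <= tj j.+1)%N /\ (tj j.+1 <= m)%N.
Proof. move=> hj; split; [apply: g; rewrite size_bnds; lia | apply: t_le_m; lia]. Qed.

Lemma xs_piece j i : (j < (size s).+1)%N -> (tj j < i <= tj j.+1)%N ->
  xs i = vl w (tj j) (tj j.+1) i.
Proof.
move=> hj hi; rewrite /xs (bigD1 (Ordinal hj)) //= hi big1 ?addr0 // => k hk.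
case: ifP => // hk2; exfalso; move: hk => /eqP; apply; apply: val_inj => /=.
apply: (locate_unique g) hk2 hi; rewrite size_bnds; have := ltn_ord k; lia.
Qed.

Lemma V_xs : V xs = decomp_length w m s.
Proof.
have pl : path leq 0%N (rcons s m).
  apply/(pathP 0%N) => i; rewrite size_rcons => hi.
  have := g (j := i); rewrite size_bnds /bnds /=; move=> /(_ ltac:(lia)); lia.
rewrite /V; have := @split_sum R (fun i => w i * xs i) 0%N (rcons s m) pl.
rewrite last_rcons => ->; rewrite size_rcons /decomp_length.
apply: eq_bigr => j _.
have [h1 h2] := piece_ok (ltn_ord j).
have L0 := Lb_pos hw h1 h2.
have hz : forall i, (tj j < i <= tj j.+1)%N -> xs i =
    if odd (i - tj j) then sigma_odd_sub w (tj j) (tj j.+1) / Lbare w (tj j) (tj j.+1)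
    else sigma_even_sub w (tj j) (tj j.+1) / Lbare w (tj j) (tj j.+1).
  by move=> i hi; rewrite (xs_piece (ltn_ord j) hi).
rewrite (piece_sum w hz).
set p := sigma_odd_sub _ _ _; set q := sigma_even_sub _ _ _; set L := Lbare _ _ _.
have e : L ^+ 2 = p ^+ 2 + q ^+ 2 by rewrite /L /Lbare nrm_sqr.
have nz : L != 0 by rewrite gt_eqF.
have -> : p * (p / L) + q * (q / L) = (p ^+ 2 + q ^+ 2) / L by field.
by rewrite -e expr2 mulfK.
Qed.

Lemma locate_t i : (1 <= i <= m)%N ->
  exists2 j, (j < (size s).+1)%N & (tj j < i <= tj j.+1)%N.
Proof.
move=> hi; apply: (@locate t i (size s).+1); first by rewrite size_bnds.
rewrite nth_bnds_last /bnds /=; lia.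
Qed.

Lemma xs_sq_le1 i : (1 <= i <= m)%N -> xs i ^+ 2 <= 1.
Proof.
move=> hi; have [j hj hij] := locate_t hi; have [h1 h2] := piece_ok hj.
rewrite (xs_piece hj hij); have := vl_sq hw h1 h2 (i := i) ltac:(lia).
have := sqr_ge0 (vl w (tj j) (tj j.+1) i.+1); lra.
Qed.

Lemma xs_inner k : (1 <= k < m)%N -> k \notin t -> xs k ^+ 2 + xs k.+1 ^+ 2 = 1.
Proof.
move=> hk kt; have [j hj hij] := locate_t (i := k) ltac:(lia).
have [h1 h2] := piece_ok hj.
have hne : k != tj j.+1.
  apply/eqP => e; move/negP: kt; apply; rewrite e; apply: mem_nth; rewrite size_bnds; lia.
rewrite (xs_piece hj hij) (xs_piece (i := k.+1) hj); last by move/eqP: hne; lia.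
by rewrite (vl_sq hw h1 h2) //; lia.
Qed.

Lemma xs_feas_gen :
  (forall j, (1 <= j <= size s)%N ->
     vl w (tj j.-1) (tj j) (tj j) ^+ 2 + vl w (tj j) (tj j.+1) (tj j).+1 ^+ 2 <= 1) ->
  feas xs.
Proof.
move=> hb i /andP[i1 i2].
have [j hj hi] : exists2 j, (j < (size s).+1)%N & (tj j < i <= tj j.+1)%N.
  apply: (@locate t i (size s).+1); first by rewrite size_bnds.
  rewrite nth_bnds_last /bnds /=; lia.
have [h1 h2] := piece_ok hj.
case: (ltnP i (tj j.+1)) => hij.
- rewrite (xs_piece hj hi) (xs_piece (i := i.+1) hj); last by lia.
  rewrite (vl_sq hw h1 h2); first done.
  lia.
- have ei : i = tj j.+1 by lia.
  have hj1 : (j.+1 < (size s).+1)%N.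
    case: (ltnP j.+1 (size s).+1) => // hh.
    have ej : j = size s by lia.
    move: ei; rewrite ej nth_bnds_last; lia.
  have [h3 h4] := piece_ok hj1.
  rewrite (xs_piece hj hi) (xs_piece (i := i.+1) hj1); last by lia.
  rewrite ei; exact: (hb j.+1 ltac:(lia)).
Qed.

Lemma xs_feas : admissible w m s -> feas xs.
Proof.
move=> [_ adm]; apply: xs_feas_gen => j hj.
have hj' : (j.-1 < (size s).+1)%N by lia.
have hj'' : (j < (size s).+1)%N by lia.
have [h1 h2] := piece_ok hj'; have [h3 h4] := piece_ok hj''.
have e : j.-1.+1 = j by lia.
rewrite e in h1 h2.
apply: ltW; apply/(delta_equiv hw h1 h3 h4).
exact: (adm j hj).
Qed.
End S.
Lemma adm_gap s : admissible w m s -> gap (bnds m s).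
Proof. by move=> [h _]; apply/gap_path. Qed.

Lemma lower_bound s : admissible w m s -> decomp_length w m s <= L1 w m.
Proof.
move=> hs; have g := adm_gap hs.
rewrite -(V_xs g); apply: V_le_L1; exact: xs_feas.
Qed.

Lemma feas_ext x y : (forall k, (1 <= k <= m)%N -> x k = y k) -> feas x -> feas y.
Proof.
move=> e fx i hi; rewrite -!e; [exact: fx| lia | lia].
Qed.

Lemma V_ext x y : (forall k, (1 <= k <= m)%N -> x k = y k) -> V x = V y.
Proof.
move=> e; rewrite /V big_nat_cond [RHS]big_nat_cond; apply: eq_bigr => i /andP[hi _].
rewrite e //; lia.
Qed.
End Decomp.

End E.
Import E.

From mathcomp Require boolp topology normedtype derive matrix_normedtype.
Module F.
Import boolp topology normedtype derive matrix_normedtype.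
Set Implicit Arguments. Unset Strict Implicit.
Import Order.TTheory GRing.Theory Num.Theory.
Import numFieldTopology.Exports numFieldNormedType.Exports.
Local Open Scope ring_scope.
Local Open Scope classical_set_scope.

Section Compact.
Variables (R : realType) (w : nat -> R) (n : nat).

Definition tofun (v : 'rV[R]_n.+1) (k : nat) : R := v ord0 (inord k.-1).

Lemma cont_coord (k : nat) : continuous (fun v : 'rV[R]_n.+1 => tofun v k).
Proof. move=> v; exact: coord_continuous. Qed.

Lemma cont_sum (r : seq nat) (F : nat -> 'rV[R]_n.+1 -> R) :
  (forall i, continuous (F i)) -> continuous (fun v => \sum_(i <- r) F i v).
Proof.
move=> hF; elim: r => [|a r IH].
  by under eq_fun do rewrite big_nil; exact: cst_continuous.
under eq_fun do rewrite big_cons.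
move=> v; apply: continuousD; [exact: hF | exact: IH].
Qed.

Lemma closed_Ck (k : nat) : closed [set v : 'rV[R]_n.+1 |
   (1 <= k < n.+1)%N -> tofun v k ^+ 2 + tofun v k.+1 ^+ 2 <= 1].
Proof.
have /orP[hk|hk] := orbN (1 <= k < n.+1)%N.
- have -> : [set v : 'rV[R]_n.+1 | (1 <= k < n.+1)%N -> tofun v k ^+ 2 + tofun v k.+1 ^+ 2 <= 1]
     = (fun v => tofun v k * tofun v k + tofun v k.+1 * tofun v k.+1) @^-1` [set x : R | x <= 1].
    apply/seteqP; split => v /=; rewrite !expr2; [by apply| by move=> h _].
  apply: (continuous_closedP _).1; last exact: closed_le.
  move=> v.
  apply: (@continuousD _ _ _ (fun v => tofun v k * tofun v k) (fun v => tofun v k.+1 * tofun v k.+1));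
   apply: (@continuousM _ _ (fun v => tofun v _) (fun v => tofun v _)); exact: cont_coord.
- have -> : [set v : 'rV[R]_n.+1 | (1 <= k < n.+1)%N -> tofun v k ^+ 2 + tofun v k.+1 ^+ 2 <= 1]
     = setT.
    by apply/seteqP; split => v //= _ hk'; rewrite hk' in hk.
  exact: closedT.
Qed.

Lemma closed_C : closed [set v : 'rV[R]_n.+1 | feas n.+1 (tofun v)].
Proof.
have -> : [set v : 'rV[R]_n.+1 | feas n.+1 (tofun v)] =
  \bigcap_(k in [set: nat]) [set v : 'rV[R]_n.+1 |
   (1 <= k < n.+1)%N -> tofun v k ^+ 2 + tofun v k.+1 ^+ 2 <= 1].
  by apply/seteqP; split => v /= h; [move=> k _ | move=> k]; apply: h.
apply: closed_bigI => k _; exact: closed_Ck.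
Qed.
Lemma exists_max : (1 <= n)%N -> exists2 x : nat -> R, feas n.+1 x &
  forall x', feas n.+1 x' -> V w n.+1 x' <= V w n.+1 x.
Proof.
move=> n1; have hm : (2 <= n.+1)%N by lia.
pose B := [set v : 'rV[R]_n.+1 | forall i, `[(-1 : R), 1]%classic (v ord0 i)].
pose C := [set v : 'rV[R]_n.+1 | feas n.+1 (tofun v)].
pose f := fun v : 'rV[R]_n.+1 => \sum_(1 <= i < n.+2) w i * tofun v i.
have cB : compact B by apply: (@rV_compact _ _ (fun=> `[(-1 : R), 1]%classic)) => i; exact: segment_compact.
have cA : compact (B `&` C) by apply: compact_closedI => //; exact: closed_C.
pose row_of (x : nat -> R) := \row_(i < n.+1) x i.+1.
have tofunK x k : (1 <= k <= n.+1)%N -> tofun (row_of x) k = x k.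
  move=> hk; rewrite /tofun /row_of mxE inordK; last by lia.
  by congr (x _); lia.
have inA x : feas n.+1 x -> (B `&` C) (row_of x).
  move=> fx; split.
  - move=> i /=; rewrite mxE in_itv /=.
    have hi : (1 <= i.+1 <= n.+1)%N by have := ltn_ord i; lia.
    have := feas_le1 hm fx hi => h; apply/andP; split; nra.
  - rewrite /C /=; apply: (feas_ext hm _ fx) => k hk; by rewrite tofunK.
have fV x : feas n.+1 x -> f (row_of x) = V w n.+1 x.
  move=> fx; rewrite /f /V big_nat_cond [RHS]big_nat_cond; apply: eq_bigr => i /andP[hi _].
  by rewrite tofunK //; lia.
have A0 : (B `&` C) !=set0 by exists (row_of (fun=> 0)); apply: inA => i _; rewrite expr0n /=; lra.
have cf : {within B `&` C, continuous f}.
  apply: continuous_subspaceT; rewrite /f.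
  apply: cont_sum => i v.
  apply: (@continuousM _ _ (fun=> w i) (fun v => tofun v i)); [exact: cst_continuous | exact: cont_coord].
have [c cA' cmax] := EVT_max_rV A0 cA cf.
move: (cA'); rewrite inE => -[_ cC].
exists (tofun c) => // x' fx'.
have := cmax (row_of x'); rewrite inE => /(_ (inA _ fx')).
by rewrite fV // /f /V.
Qed.
End Compact.

End F.
Import F.

Module G.
Set Implicit Arguments. Unset Strict Implicit.
Import Order.TTheory GRing.Theory Num.Theory.
Local Open Scope ring_scope.

Section Upper.
Variables (R : realType) (w : nat -> R) (m : nat).
Hypothesis hm : (2 <= m)%N.
Hypothesis hw : forall i : nat, (1 <= i <= m)%N -> 0 < w i.

Local Notation feas := (@feas R m).
Local Notation V := (@V R w m).

Lemma abs_max x : feas x -> (forall x', feas x' -> V x' <= V x) ->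
  feas (fun k => `|x k|) /\ (forall x', feas x' -> V x' <= V (fun k => `|x k|)).
Proof.
move=> fx mx; have fa : feas (fun k => `|x k|) by move=> i hi /=; rewrite !real_normK ?num_real //; exact: fx.
split => // x' fx'; apply: le_trans (mx _ fx') _.
rewrite /E.V big_nat_cond [X in _ <= X]big_nat_cond; apply: ler_sum => i /andP[hi _].
apply: ler_wpM2l; [apply: ltW; apply: hw; lia | exact: ler_norm].
Qed.

Variable y : nat -> R.
Hypothesis fy : feas y.
Hypothesis my : forall x', feas x' -> V x' <= V y.
Hypothesis y0 : forall k, 0 <= y k.

Definition tight k : bool := y k ^+ 2 + y k.+1 ^+ 2 == 1.

Lemma slack_lt k : (1 <= k < m)%N -> ~~ tight k -> y k ^+ 2 + y k.+1 ^+ 2 < 1.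
Proof. by move=> hk nt; rewrite lt_neqAle nt fy. Qed.

Lemma covered i : (1 <= i <= m)%N ->
  ((2 <= i)%N && tight i.-1) || ((i < m)%N && tight i).
Proof.
move=> hi; case hl: ((2 <= i)%N && tight i.-1) => //=.
case hr: ((i < m)%N && tight i) => //; exfalso.
pose dl := if (2 <= i)%N then 1 - (y i.-1 ^+ 2 + y i ^+ 2) else 1.
pose dr := if (i < m)%N then 1 - (y i ^+ 2 + y i.+1 ^+ 2) else 1.
have dl0 : 0 < dl.
  rewrite /dl; case: ifP => h2 //; move: hl; rewrite h2 /= => hl.
  have := slack_lt (k := i.-1) ltac:(lia) (negbT hl); have -> : i.-1.+1 = i by lia.
  lra.
have dr0 : 0 < dr.
  rewrite /dr; case: ifP => h2 //; move: hr; rewrite h2 /= => hr.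
  have := slack_lt (k := i) ltac:(lia) (negbT hr); lra.
pose d := Num.min dl dr.
have d0 : 0 < d by rewrite lt_min dl0 dr0.
have ddl : d <= dl by rewrite ge_min lexx.
have ddr : d <= dr by rewrite ge_min lexx orbT.
have yi0 : 0 <= y i ^+ 2 + d by have := sqr_ge0 (y i); lra.
pose y' := fun k => if k == i then Num.sqrt (y i ^+ 2 + d) else y k.
have fy' : feas y'.
  move=> k hk; rewrite /y'.
  case: (eqVneq k i) => [ek|nk].
  - rewrite ek ?eqxx (_ : (i.+1 == i) = false); last by apply/negbTE; lia.
    rewrite sqr_sqrtr //; move: ddr; rewrite /dr ifT; [lra | lia].
  - case: (eqVneq k.+1 i) => [ek1|nk1].
    + rewrite sqr_sqrtr //; move: ddl; rewrite /dl ifT; last by lia.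
      have -> : i.-1 = k by lia.
      lra.
    + exact: fy hk.
have lt1 : y i < Num.sqrt (y i ^+ 2 + d).
  have h0 : y i \in Num.nneg by rewrite nnegrE.
  have h1 : Num.sqrt (y i ^+ 2 + d) \in Num.nneg by rewrite nnegrE sqrtr_ge0.
  rewrite -(ltr_pXn2r (n := 2) _ h0 h1) // sqr_sqrtr //; lra.
have := my fy'; apply/negP; rewrite -ltNge.
have hin : i \in index_iota 1 m.+1 by rewrite mem_index_iota; lia.
rewrite /E.V -subr_gt0 -sumrB (bigD1_seq i hin (iota_uniq _ _)) /=.
rewrite big1 ?addr0.
  rewrite /y' eqxx -mulrBr; apply: mulr_gt0; [apply: hw; lia | lra].
by move=> k /negbTE nk; rewrite /y' nk subrr.
Qed.

Definition sy := [seq k <- iota 1 m.-1 | ~~ tight k].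

Lemma mem_sy k : (k \in sy) = (1 <= k < m)%N && ~~ tight k.
Proof.
rewrite /sy mem_filter mem_iota andbC; congr (_ && _).
apply/idP/idP => /andP[h1 h2]; apply/andP; split => //; lia.
Qed.

Local Notation t := (bnds m sy).

Lemma t_elem k : k \in t -> k = 0%N \/ ((1 <= k < m)%N /\ ~~ tight k) \/ k = m.
Proof.
move=> /mem_bnds [->|[|->]]; [by left| |by right; right].
by rewrite mem_sy => /andP[h1 h2]; right; left.
Qed.

Lemma t_sorted : sorted ltn t.
Proof.
have ss : sorted ltn sy := sorted_filter ltn_trans _ (iota_ltn_sorted 1 m.-1).
rewrite /bnds /= rcons_path (path_sortedE ltn_trans) ss andbT; apply/andP; split.
  by apply/allP => k; rewrite mem_sy => /andP[h _]; lia.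
have := mem_last 0%N sy; rewrite in_cons => /orP[/eqP->|]; first lia.
by rewrite mem_sy => /andP[h _]; move: h; rewrite /ltn /=; lia.
Qed.

Lemma sy_gap : gap t.
Proof.
move=> j hj.
have st := t_sorted.
have lt : (nth 0%N t j < nth 0%N t j.+1)%N.
  apply: (sorted_ltn_nth ltn_trans 0 st); rewrite ?inE //; lia.
have m1 : nth 0%N t j \in t by apply: mem_nth; exact: ltnW.
have m2 : nth 0%N t j.+1 \in t by apply: mem_nth.
have h1 := t_elem m1; have h2 := t_elem m2.
case: (ltnP (nth 0%N t j).+1 (nth 0%N t j.+1)) => // hle.
have e : nth 0%N t j.+1 = (nth 0%N t j).+1 by lia.
have hv : (1 <= nth 0%N t j.+1 <= m)%N by case: h2 => [|[]]; lia.
move: (covered hv) => /orP[/andP[v2 tv]|/andP[vm tv]].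
- rewrite e /= in tv; case: h1 => [|[[_ /negP]|]]; [lia| by []| lia].
- case: h2 => [|[[_ /negP]|]]; [lia| by [] | lia].
Qed.
Local Notation tj j := (nth 0%N (bnds m sy) j).

Lemma inner_tight j k : (j < (size sy).+1)%N -> (tj j < k < tj j.+1)%N -> tight k.
Proof.
move=> hj hk.
have nt := gap_notin sy_gap (j := j) ltac:(rewrite size_bnds; lia) hk.
have hm' := t_le_m hm sy_gap (j := j.+1) ltac:(lia).
have : k \notin sy.
  apply: contra nt => ks; by rewrite /bnds in_cons mem_rcons in_cons ks !orbT.
rewrite mem_sy negb_and negbK => /orP[|//]; lia.
Qed.

Lemma two_step i : tight i -> tight i.+1 -> y i.+2 = y i.
Proof.
rewrite /tight => /eqP h1 /eqP h2; apply/eqP; rewrite -(eqrXn2 (n := 2)) //.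
apply/eqP; lra.
Qed.

Lemma alt j : (j < (size sy).+1)%N -> forall i, (tj j < i <= tj j.+1)%N ->
  y i = if odd (i - tj j) then y (tj j).+1 else y (tj j).+2.
Proof.
move=> hj; set a := tj j; set b := tj j.+1.
have [gab _] := piece_ok hm sy_gap hj; rewrite -/a -/b in gab.
have key : forall d, ((a + d.+1 <= b)%N -> y (a + d.+1) = if odd d.+1 then y a.+1 else y a.+2) /\
                     ((a + d.+2 <= b)%N -> y (a + d.+2) = if odd d.+2 then y a.+1 else y a.+2).
  elim => [|d [IH1 IH2]].
    by split => _ /=; [rewrite addn1 | rewrite addn2].
  split => // hd.
  have e : (a + d.+3 = (a + d.+1).+2)%N by lia.
  rewrite e two_step.
  - rewrite IH1 /=; [by rewrite negbK | lia].
  - apply: (inner_tight hj); rewrite -/a -/b; lia.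
  - apply: (inner_tight hj); rewrite -/a -/b; lia.
move=> i hi; have e : i = (a + (i - a).-1.+1)%N by lia.
have e2 : (i - a = (i - a).-1.+1)%N by lia.
rewrite e2 [in LHS]e; apply: (key _).1; lia.
Qed.

Lemma piece_y j : (j < (size sy).+1)%N ->
  y (tj j).+1 ^+ 2 + y (tj j).+2 ^+ 2 = 1 /\
  \sum_((tj j).+1 <= i < (tj j.+1).+1) w i * y i =
  sigma_odd_sub w (tj j) (tj j.+1) * y (tj j).+1 + sigma_even_sub w (tj j) (tj j.+1) * y (tj j).+2.
Proof.
move=> hj; have [gab _] := piece_ok hm sy_gap hj; split.
  apply/eqP; apply: (inner_tight hj); lia.
by apply: piece_sum; exact: alt.
Qed.

Lemma path_t : path leq 0%N (rcons sy m).
Proof.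
apply/(pathP 0%N) => i; rewrite size_rcons => hi.
have := sy_gap (j := i); rewrite size_bnds /bnds /=; move=> /(_ ltac:(lia)); lia.
Qed.

Lemma V_y : V y = \sum_(j < (size sy).+1)
  (sigma_odd_sub w (tj j) (tj j.+1) * y (tj j).+1 + sigma_even_sub w (tj j) (tj j.+1) * y (tj j).+2).
Proof.
rewrite /E.V; have := @split_sum R (fun i => w i * y i) 0%N (rcons sy m) path_t.
rewrite last_rcons => ->; rewrite size_rcons; apply: eq_bigr => j _.
exact: (piece_y (ltn_ord j)).2.
Qed.
Lemma min_seq (r : seq nat) (F : nat -> R) : (forall k, k \in r -> 0 < F k) ->
  let tau := foldr (fun k acc => Num.min (F k) acc) 1 r in
  0 < tau /\ tau <= 1 /\ (forall k, k \in r -> tau <= F k).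
Proof.
elim: r => [|a r IH] hF /=; first by split => //; lra.
have [t0 [t1 t2]] := IH (fun k hk => hF k (introT idP (etrans (in_cons a r k) (introT orP (or_intror hk))))) .
have Fa := hF a (mem_head _ _).
split; first by rewrite lt_min Fa t0.
split; first by rewrite ge_min t1 orbT.
move=> k; rewrite in_cons => /orP[/eqP->|hk]; first by rewrite ge_min lexx.
by rewrite ge_min t2 ?orbT.
Qed.

Lemma convex_sq (tau a b : R) : 0 <= tau <= 1 ->
  ((1 - tau) * a + tau * b) ^+ 2 <= (1 - tau) * a ^+ 2 + tau * b ^+ 2.
Proof.
move=> /andP[h0 h1].
have e : (1 - tau) * a ^+ 2 + tau * b ^+ 2 - ((1 - tau) * a + tau * b) ^+ 2 =
  tau * (1 - tau) * (a - b) ^+ 2 by ring.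
rewrite -subr_ge0 e; apply: mulr_ge0; [apply: mulr_ge0; lra | exact: sqr_ge0].
Qed.

Local Notation xsy := (xs w m sy).

Lemma Vxs_le : V xsy <= V y.
Proof.
pose del k := 1 - (y k ^+ 2 + y k.+1 ^+ 2).
have hd : forall k, k \in sy -> 0 < del k / 2.
  move=> k; rewrite mem_sy => /andP[hk nt]; have := slack_lt hk nt; rewrite /del.
  move=> h; apply: divr_gt0; lra.
have [t0 [t1 t2]] := min_seq hd.
set tau := foldr _ _ _ in t0 t1 t2.
pose z k := (1 - tau) * y k + tau * xsy k.
have fz : feas z.
  move=> k hk.
  have tt : 0 <= tau <= 1 by apply/andP; split; lra.
  have c1 := convex_sq (y k) (xsy k) tt.
  have c2 := convex_sq (y k.+1) (xsy k.+1) tt.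
  rewrite /z; apply: le_trans (lerD c1 c2) _.
  have x1 := xs_sq_le1 hm hw sy_gap (i := k) ltac:(lia).
  have x2 := xs_sq_le1 hm hw sy_gap (i := k.+1) ltac:(lia).
  case ks: (k \in sy).
  - have tk := t2 k ks; have dk := hd k ks; move: tk dk; rewrite /del => tk dk.
    have s0 := sqr_ge0 (y k); have s1 := sqr_ge0 (y k.+1).
    have : tau * (xsy k ^+ 2 + xsy k.+1 ^+ 2) <= tau * 2.
      apply: ler_wpM2l; lra.
    nra.
  - have nt : tight k by move: ks; rewrite mem_sy hk /= => /negbFE.
    have nk : k \notin bnds m sy.
      rewrite /bnds in_cons mem_rcons in_cons ks orbF negb_or; apply/andP; split; apply/eqP; lia.
    have := xs_inner hm hw sy_gap hk nk; move/eqP: nt => nt.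
    move=> hx; have -> : (1 - tau) * y k ^+ 2 + tau * xsy k ^+ 2 +
      ((1 - tau) * y k.+1 ^+ 2 + tau * xsy k.+1 ^+ 2) =
      (1 - tau) * (y k ^+ 2 + y k.+1 ^+ 2) + tau * (xsy k ^+ 2 + xsy k.+1 ^+ 2) by ring.
    rewrite nt hx; lra.
have Vz : V z = (1 - tau) * V y + tau * V xsy.
  rewrite /E.V !mulr_sumr -big_split /=; apply: eq_bigr => i _; rewrite /z; ring.
have := my fz; rewrite Vz => h.
have : tau * (V xsy - V y) <= 0 by rewrite mulrBr; lra.
rewrite pmulr_rle0 //; lra.
Qed.
Lemma y_eq_xs i : (1 <= i <= m)%N -> y i = xsy i.
Proof.
have Vx := V_xs hm hw sy_gap.
have Vy := V_y.
have le := Vxs_le.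
pose L (j : 'I_(size sy).+1) := Lbare w (tj j) (tj j.+1).
pose c (j : 'I_(size sy).+1) := sigma_odd_sub w (tj j) (tj j.+1) * y (tj j).+1 +
   sigma_even_sub w (tj j) (tj j.+1) * y (tj j).+2.
have cle : forall j, c j <= L j.
  move=> j; exact: cs_le (piece_y (ltn_ord j)).1.
have sum0 : \sum_(j < (size sy).+1) (L j - c j) = 0.
  apply/eqP; rewrite eq_le sumr_ge0 ?andbT; last by move=> j _; rewrite subr_ge0.
  rewrite sumrB; move: le; rewrite Vx Vy /decomp_length; lra.
have eqj : forall j, c j = L j.
  have ge : forall k : 'I_(size sy).+1, predT k -> 0 <= L k - c k by move=> k _; rewrite subr_ge0.
  move=> j; have := psumr_eq0P ge sum0 (i := j) isT.
  lra.
move=> hi; have [j hj hij] := locate_t hm sy hi.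
have L0 : 0 < L (Ordinal hj).
  have [h1 h2] := piece_ok hm sy_gap hj; by move: (Lb_pos hw h1 h2).
have [e1 e2] := @cs_eq R _ _ _ _ (piece_y hj).1 L0 (eqj (Ordinal hj)).
rewrite (xs_piece w hm sy_gap hj hij) (alt hj hij) /vl /=.
by rewrite -/(L (Ordinal hj)) -e1 -e2.
Qed.

Lemma upper_main : admissible w m sy /\ V y = decomp_length w m sy.
Proof.
split; last first.
  rewrite -(V_xs hm hw sy_gap); apply: V_ext => k hk; exact: y_eq_xs.
split; first exact/gap_path/sy_gap.
move=> j hj /=.
have hj' : (j.-1 < (size sy).+1)%N by lia.
have hj'' : (j < (size sy).+1)%N by lia.
have [h1 h2] := piece_ok hm sy_gap hj'; have [h3 h4] := piece_ok hm sy_gap hj''.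
have e : j.-1.+1 = j by lia.
rewrite e in h1 h2.
apply/(delta_equiv hw h1 h3 h4).
have bs : tj j \in sy.
  have -> : tj j = nth 0%N sy j.-1.
    by rewrite -{1}e /bnds /= nth_rcons ifT //; lia.
  have hs : (j.-1 < size sy)%N by lia.
  exact: mem_nth hs.
move: bs; rewrite mem_sy => /andP[hb nt].
have := slack_lt hb nt.
rewrite !y_eq_xs; try lia.
rewrite (xs_piece w hm sy_gap hj' (i := tj j)); last by rewrite e; lia.
rewrite (xs_piece w hm sy_gap hj'' (i := (tj j).+1)); last by lia.
by rewrite e.
Qed.
End Upper.

End G.
Import G.

Module H.
Set Implicit Arguments. Unset Strict Implicit.
Import Order.TTheory GRing.Theory Num.Theory.
Local Open Scope ring_scope.

Section Strict.
Variables (R : realType) (w : nat -> R) (m : nat).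
Hypothesis hm : (2 <= m)%N.
Hypothesis hw : forall i : nat, (1 <= i <= m)%N -> 0 < w i.

Lemma tsig_split (s : seq nat) (par : bool) : gap (bnds m s) ->
  \sum_(1 <= i < m.+1 | odd i == par) w i =
  \sum_(j < (size s).+1) \sum_((nth 0%N (bnds m s) j).+1 <= i < (nth 0%N (bnds m s) j.+1).+1 | odd i == par) w i.
Proof.
move=> g.
have pl : path leq 0%N (rcons s m).
  apply/(pathP 0%N) => i; rewrite size_rcons => hi.
  have := g i; rewrite size_bnds /bnds /=; move=> /(_ ltac:(lia)); lia.
rewrite big_mkcond; have := @split_sum R (fun i => if odd i == par then w i else 0) 0%N (rcons s m) pl.
rewrite last_rcons => ->; rewrite size_rcons; apply: eq_bigr => j _.
by rewrite [RHS]big_mkcond.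
Qed.

Lemma tso_eq a b : tsigma_odd w a b = \sum_(a.+1 <= i < b.+1 | odd i == true) w i.
Proof. by rewrite /tsigma_odd; apply: eq_bigl => i; rewrite eqb_id. Qed.

Lemma tse_eq a b : tsigma_even w a b = \sum_(a.+1 <= i < b.+1 | odd i == false) w i.
Proof. by rewrite /tsigma_even; apply: eq_bigl => i; rewrite eqbF_neg. Qed.

Lemma strict_gt s : admissible w m s -> s <> [::] -> Lbare w 0 m < decomp_length w m s.
Proof.
move=> hs sne; have g := adm_gap hs.
set tj := fun j => nth 0%N (bnds m s) j.
pose P := tsigma_odd w 0 m; pose Q := tsigma_even w 0 m.
have L0 : 0 < Lbare w 0 m by move: (Lb_pos hw hm (leqnn m)).
have LE : Lbare w 0 m = Num.sqrt (P ^+ 2 + Q ^+ 2) by rewrite Lbare_t.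
set L := Lbare w 0 m in L0 LE.
have hu : (P / L) ^+ 2 + (Q / L) ^+ 2 = 1.
  rewrite !expr_div_n -mulrDl LE nrm_sqr -nrm_sqr -LE divff //; rewrite expf_neq0 // gt_eqF //.
pose Lj (j : 'I_(size s).+1) := Lbare w (tj j) (tj j.+1).
pose cj (j : 'I_(size s).+1) := tsigma_odd w (tj j) (tj j.+1) * (P / L) + tsigma_even w (tj j) (tj j.+1) * (Q / L).
have cle : forall j, cj j <= Lj j.
  move=> j; rewrite /cj /Lj Lbare_t; exact: cs_le.
have sumc : \sum_j cj j = L.
  rewrite /cj big_split /= -!mulr_suml.
  rewrite (eq_bigr (fun j : 'I_(size s).+1 => \sum_((tj j).+1 <= i < (tj j.+1).+1 | odd i == true) w i));
    last by move=> j _; rewrite tso_eq.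
  rewrite [X in _ + X * _](eq_bigr (fun j : 'I_(size s).+1 => \sum_((tj j).+1 <= i < (tj j.+1).+1 | odd i == false) w i));
    last by move=> j _; rewrite tse_eq.
  rewrite -!tsig_split // -tso_eq -tse_eq -/P -/Q.
  have e : L ^+ 2 = P ^+ 2 + Q ^+ 2 by rewrite LE nrm_sqr.
  have nz : L != 0 by rewrite gt_eqF.
  have -> : P * (P / L) + Q * (Q / L) = (P ^+ 2 + Q ^+ 2) / L by field.
  by rewrite -e expr2 mulfK.
rewrite -/L lt_neqAle; apply/andP; split; last first.
  by rewrite -sumc /decomp_length; apply: ler_sum => j _; exact: cle.
apply/negP => /eqP heq.
have sum0 : \sum_(j < (size s).+1) (Lj j - cj j) = 0.
  rewrite sumrB sumc; change (decomp_length w m s - L = 0); by rewrite heq subrr.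
have ge : forall k : 'I_(size s).+1, predT k -> 0 <= Lj k - cj k by move=> k _; rewrite subr_ge0.
have eqj : forall j, cj j = Lj j by move=> j; have := psumr_eq0P ge sum0 (i := j) isT; lra.
have hsz : (0 < size s)%N by case: s sne hs g {tj Lj cj cle sumc heq sum0 ge eqj} => //.
have h0 : (0 < (size s).+1)%N by [].
have h1 : (1 < (size s).+1)%N by [].
have Lp : forall j (hj : (j < (size s).+1)%N), 0 < Lj (Ordinal hj).
  move=> j hj; have [a1 a2] := piece_ok hm g hj; by move: (Lb_pos hw a1 a2).
have key : forall j (hj : (j < (size s).+1)%N),
    tsigma_odd w (tj j) (tj j.+1) = P / L * Lj (Ordinal hj) /\
    tsigma_even w (tj j) (tj j.+1) = Q / L * Lj (Ordinal hj).
  move=> j hj; have lp := Lp j hj; rewrite /Lj /= Lbare_t in lp.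
  have e := eqj (Ordinal hj); rewrite /cj /Lj /= Lbare_t in e.
  have [e1 e2] := @cs_eq R _ _ _ _ hu lp e.
  rewrite /Lj /= Lbare_t e1 e2 !mulfVK ?gt_eqF //.
have [a1 a2] := key 0%N h0; have [b1 b2] := key 1%N h1.
have := (hs.2 1%N ltac:(lia)); rewrite /= /Delta.
rewrite -/(tj 0%N) -/(tj 1%N) -/(tj 2%N) a1 a2 b1 b2.
set A := Lj _; set B := Lj _.
have -> : Q / L * A * (P / L * B) - Q / L * B * (P / L * A) = 0 by ring.
by case: ifP => _; rewrite ltxx.
Qed.
End Strict.

End H.
Import H.

Import Order.TTheory GRing.Theory Num.Theory.
Local Open Scope ring_scope.

Theorem mainTheorem7 (R : realType) (w : nat -> R) (m : nat)
  (hm : (2 <= m)%N) (hw : forall i : nat, (1 <= i <= m)%N -> 0 < w i) :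
  ((exists2 s : seq nat, admissible w m s & L1 w m = decomp_length w m s) /\
   (forall s : seq nat, admissible w m s -> decomp_length w m s <= L1 w m)) /\
  (extremal w m <-> (forall s : seq nat, admissible w m s -> s = [::])).
Proof.
have [x fx mx] : exists2 x : nat -> R, feas m x & forall x', feas m x' -> V w m x' <= V w m x.
  case: m hm hw => [//|n] hm hw; apply: exists_max; lia.
have [fa ma] := abs_max hm hw fx mx.
have y0 : forall k, 0 <= `|x k| by move=> k; exact: normr_ge0.
have [adm eqV] := upper_main hm hw fa ma y0.
have L1y : L1 w m = V w m (fun k => `|x k|).
  apply/eqP; rewrite eq_le; apply/andP; split.
  - exact: L1_le.
  - by move: (V_le_L1 hm hw fa).
have lb : forall s, admissible w m s -> decomp_length w m s <= L1 w m.
  by move=> s hs; move: (lower_bound hm hw hs).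
split; first split.
- by exists (sy m (fun k => `|x k|)); [exact: adm | rewrite L1y eqV].
- exact: lb.
split.
- move=> ext [//|a s'] hs; exfalso.
  have ne : a :: s' <> [::] by [].
  have := strict_gt hm hw hs ne.
  have := lb _ hs; rewrite /extremal in ext; rewrite ext; lra.
- move=> h; rewrite /extremal L1y eqV.
  have := h _ adm => ->.
  by rewrite /decomp_length big_ord1.
Qed.
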